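(* Let $K\ge 2$, let $L_1,\dots,L_K:\mathbb{R}^d\to\mathbb{R}$ be twice differentiable and convex, and let $\mu>0$, $\rho,\delta\ge 0$. Assume every $L_k$ is $\mu$-smooth and $\rho$-Hessian Lipschitz. Let $\widehat{w}_1,\dots,\widehat{w}_{K-1}\in\mathbb{R}^d$ and let $H_1,\dots,H_{K-1}$ be symmetric positive semidefinite $d\times d$ matrices with $\|H_k\|_2\le\mu$ and $\|H_k-\nabla^2L_k(\widehat{w}_k)\|_2\le\delta$ for all $k\in[K-1]$. Define \[ \widetilde{L}_{K-1}(w)=\sum_{k=1}^{K-1}\Big(L_k(\widehat{w}_k)+(w-\widehat{w}_k)^\top\nabla L_k(\widehat{w}_k)+\tfrac12(w-\widehat{w}_k)^\top H_k(w-\widehat{w}_k)\Big), \] $\widetilde{F}(w)=\frac1K\big(\widetilde{L}_{K-1}(w)+L_K(w)\big)$ and $F(w)=\frac1K\sum_{k=1}^K L_k(w)$. Let $\mathcal{W}\subseteq\mathbb{R}^d$, let $F^*=\min_{w\in\mathcal{W}}F(w)$, $w^*\in\arg\min_{w\in\mathcal{W}}F(w)$, $\widetilde{w}^*\in\arg\min_{w\in\mathcal{W}}\widetilde{F}(w)$ (assumed to exist). Let $w_0=\widehat{w}_{K-1}$, $\widetilde{D}=\|w_0-\widetilde{w}^*\|_2$, and run $T$ iterations of $w_t=w_{t-1}-\eta\nabla\widetilde{F}(w_{t-1})$ with $\eta=1/\mu$, the iterates lying in $\mathcal{W}$. Then \[ F(w_T)-F^*\le\frac{\alpha}{T}+\beta,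 \] where $\alpha=2\mu\widetilde{D}^2$ and \[ \beta=\frac{1}{2K}\sum_{k=1}^{K-1}\Big[\delta\big(\|w^*-\widehat{w}_k\|_2^2+2\widetilde{D}^2+2\|\widetilde{w}^*-\widehat{w}_k\|_2^2\big)+\rho\big(\|w^*-\widehat{w}_k\|_2^3+4\widetilde{D}^3+4\|\widetilde{w}^*-\widehat{w}_k\|_2^3\big)\Big]. \]
   Context: $\|\cdot\|_2$ denotes the Euclidean norm for vectors and the operator norm for matrices; $[N]=\{1,\dots,N\}$. A differentiable $f$ is $\mu$-smooth if $\|\nabla f(w)-\nabla f(w')\|_2\le\mu\|w-w'\|_2$ for all $w,w'$, and $\rho$-Hessian Lipschitz if $\|\nabla^2 f(w)-\nabla^2 f(w')\|_2\le\rho\|w-w'\|_2$ for all $w,w'$. *)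

(* Defs.v *)
From HB Require Import structures.
From mathcomp Require Import all_boot all_order all_algebra.
From mathcomp Require Import all_classical all_reals all_analysis.
Set Implicit Arguments. Unset Strict Implicit. Unset Printing Implicit Defensive.
Import Order.TTheory GRing.Theory Num.Theory.
Import numFieldNormedType.Exports.
Local Open Scope classical_set_scope.
Local Open Scope ring_scope.

Section Defs.
Variables (R : realType) (d : nat).

Definition evec (i : 'I_d) : 'cV[R]_d := delta_mx i 0.

Definition enorm (v : 'cV[R]_d) : R := Num.sqrt (\sum_(i < d) v i 0 ^+ 2).

Definition dotp (u v : 'cV[R]_d) : R := (u^T *m v) 0 0.

Definition opnorm (A : 'M[R]_d) : R :=
  sup [set enorm (A *m v) | v in [set v : 'cV[R]_d | enorm v <= 1]].

Definition grad (f : 'cV[R]_d -> R) (w : 'cV[R]_d) : 'cV[R]_d :=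
  \col_(i < d) derive f w (evec i).

Definition hess (f : 'cV[R]_d -> R) (w : 'cV[R]_d) : 'M[R]_d :=
  \matrix_(i < d, j < d) derive (fun x => grad f x i 0) w (evec j).

Definition twice_differentiable (f : 'cV[R]_d -> R) : Prop :=
  (forall w, differentiable f w) /\ (forall w, differentiable (grad f) w).

Definition convex_fun (f : 'cV[R]_d -> R) : Prop :=
  forall (x y : 'cV[R]_d) (t : R), 0 <= t <= 1 ->
    f (t *: x + (1 - t) *: y) <= t * f x + (1 - t) * f y.

Definition smooth_with (mu : R) (f : 'cV[R]_d -> R) : Prop :=
  forall w w', enorm (grad f w - grad f w') <= mu * enorm (w - w').

Definition hessian_lipschitz (rho : R) (f : 'cV[R]_d -> R) : Prop :=
  forall w w', opnorm (hess f w - hess f w') <= rho * enorm (w - w').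

Definition sym_psd (H : 'M[R]_d) : Prop :=
  H^T = H /\ forall v : 'cV[R]_d, 0 <= dotp v (H *m v).

End Defs.

(* Main.v *)
Require Import Defs.
From HB Require Import structures.
From mathcomp Require Import all_boot all_order all_algebra.
From mathcomp Require Import all_classical all_reals all_analysis.
Import Order.TTheory GRing.Theory Num.Theory.
Import numFieldNormedType.Exports.
Local Open Scope classical_set_scope.
Local Open Scope ring_scope.
From mathcomp Require Import ring lra.

Section Alg.
Context {R : realType} {d : nat}.
Local Notation V := 'cV[R]_d.

Lemma dotpE (u v : V) : dotp u v = \sum_(i < d) u i 0 * v i 0.
Proof. by rewrite /dotp !mxE; apply: eq_bigr => i _; rewrite mxE. Qed.

Lemma dotpC (u v : V) : dotp u v = dotp v u.
Proof. by rewrite !dotpE; apply: eq_bigr => i _; rewrite mulrC. Qed.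

Lemma dotpDl (u v w : V) : dotp (u + v) w = dotp u w + dotp v w.
Proof. by rewrite !dotpE -big_split; apply: eq_bigr => i _; rewrite !mxE mulrDl. Qed.

Lemma dotpDr (u v w : V) : dotp w (u + v) = dotp w u + dotp w v.
Proof. by rewrite dotpC dotpDl !(dotpC w). Qed.

Lemma dotpZl (c : R) (u w : V) : dotp (c *: u) w = c * dotp u w.
Proof. by rewrite !dotpE mulr_sumr; apply: eq_bigr => i _; rewrite !mxE mulrA. Qed.

Lemma dotpZr (c : R) (u w : V) : dotp w (c *: u) = c * dotp w u.
Proof. by rewrite dotpC dotpZl dotpC. Qed.

Lemma dotpNl (u w : V) : dotp (- u) w = - dotp u w.
Proof. by rewrite -scaleN1r dotpZl mulN1r. Qed.

Lemma dotpNr (u w : V) : dotp w (- u) = - dotp w u.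
Proof. by rewrite dotpC dotpNl dotpC. Qed.

Lemma dotpBl (u v w : V) : dotp (u - v) w = dotp u w - dotp v w.
Proof. by rewrite dotpDl dotpNl. Qed.

Lemma dotpBr (u v w : V) : dotp w (u - v) = dotp w u - dotp w v.
Proof. by rewrite dotpDr dotpNr. Qed.

Lemma dotp0l (w : V) : dotp 0 w = 0.
Proof. by rewrite dotpE big1 // => i _; rewrite mxE mul0r. Qed.

Lemma dotp0r (w : V) : dotp w 0 = 0.
Proof. by rewrite dotpC dotp0l. Qed.

Lemma dotpvv_ge0 (v : V) : 0 <= dotp v v.
Proof. by rewrite dotpE; apply: sumr_ge0 => i _; rewrite -expr2 sqr_ge0. Qed.

Lemma enorm_ge0 (v : V) : 0 <= enorm v.
Proof. exact: sqrtr_ge0. Qed.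

Lemma enorm_sq (v : V) : enorm v ^+ 2 = dotp v v.
Proof.
rewrite /enorm sqr_sqrtr; last by apply: sumr_ge0 => i _; rewrite sqr_ge0.
by rewrite dotpE; apply: eq_bigr => i _; rewrite expr2.
Qed.

Lemma sq_le (a b : R) : 0 <= b -> a ^+ 2 <= b ^+ 2 -> a <= b.
Proof.
move=> b0 h; apply: (le_trans (ler_norm a)).
have := ler_wsqrtr h. rewrite !sqrtr_sqr. by rewrite (ger0_norm b0).
Qed.

Lemma sq_eq (a b : R) : 0 <= a -> 0 <= b -> a ^+ 2 = b ^+ 2 -> a = b.
Proof. by move=> a0 b0 h; apply/le_anti/andP; split; apply: sq_le; rewrite // h. Qed.

Lemma enormZ (c : R) (v : V) : enorm (c *: v) = `|c| * enorm v.
Proof.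
apply: sq_eq; rewrite ?mulr_ge0 ?enorm_ge0 //.
by rewrite exprMn !enorm_sq dotpZl dotpZr mulrA -expr2 real_normK ?num_real.
Qed.

Lemma enormN (v : V) : enorm (- v) = enorm v.
Proof. by rewrite -scaleN1r enormZ normrN1 mul1r. Qed.

Lemma enorm0 : enorm (0 : V) = 0.
Proof. by rewrite -(scale0r (0 : V)) enormZ normr0 mul0r. Qed.

Lemma enormB (u v : V) : enorm (u - v) = enorm (v - u).
Proof. by rewrite -enormN opprB. Qed.

Lemma enorm_eq0 (v : V) : enorm v = 0 -> v = 0.
Proof.
move=> h; have : dotp v v = 0 by rewrite -enorm_sq h expr0n.
rewrite dotpE => /eqP; rewrite psumr_eq0 => [/allP H|i _]; last by rewrite -expr2 sqr_ge0.
apply/matrixP => i j; rewrite (ord1 j) mxE.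
by have := H i (mem_index_enum _); rewrite /= -expr2 sqrf_eq0 => /eqP.
Qed.

Lemma CS (u v : V) : dotp u v <= enorm u * enorm v.
Proof.
set a := enorm v; set b := enorm u.
have h := dotpvv_ge0 (a *: u - b *: v).
rewrite !(dotpBl, dotpBr, dotpZl, dotpZr) -!enorm_sq (dotpC v u) -/a -/b in h.
have [a0|] := eqVneq a 0.
  by rewrite (enorm_eq0 v a0) dotp0r a0 mulr0.
have [b0|] := eqVneq b 0.
  by rewrite (enorm_eq0 u b0) dotp0l b0 mul0r.
move=> bn0 an0.
have ha : 0 < a by rewrite lt_def an0 enorm_ge0.
have hb : 0 < b by rewrite lt_def bn0 enorm_ge0.
have hab : 0 < a * b by rewrite mulr_gt0.
rewrite -subr_ge0; rewrite -subr_ge0 in h.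
suff : 0 <= (a * b) * (b * a - dotp u v) by rewrite pmulr_rge0.
have e : a * (a * b ^+ 2 - b * dotp u v) - b * (a * dotp u v - b * a ^+ 2)
  = 2 * ((a * b) * (b * a - dotp u v)) by ring.
rewrite e in h.
by move: h; rewrite subr0 pmulr_rge0.
Qed.

Lemma CSabs (u v : V) : `|dotp u v| <= enorm u * enorm v.
Proof.
have [h|h] := lerP 0 (dotp u v); first by rewrite ger0_norm // CS.
by rewrite ltr0_norm // -dotpNl -(enormN u) CS.
Qed.

Lemma enormD (u v : V) : enorm (u + v) <= enorm u + enorm v.
Proof.
apply: sq_le; first by rewrite addr_ge0 ?enorm_ge0.
rewrite enorm_sq dotpDl !dotpDr sqrrD -!enorm_sq (dotpC v u).
have := CS u v; lra.
Qed.

Lemma enorm_coord (v : V) i : `|v i 0| <= enorm v.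
Proof.
apply: sq_le; first exact: enorm_ge0.
rewrite real_normK ?num_real // /enorm sqr_sqrtr; last by apply: sumr_ge0 => j _; rewrite sqr_ge0.
by rewrite (bigD1 i) //= lerDl; apply: sumr_ge0 => j _; rewrite sqr_ge0.
Qed.

Lemma vec_expand (v : V) : v = \sum_(i < d) v i 0 *: evec R i.
Proof.
rewrite {1}(matrix_sum_delta v); apply: eq_bigr => i _.
by rewrite big_ord1 /evec.
Qed.

Lemma dotp_evecl (v : V) i : dotp (evec R i) v = v i 0.
Proof.
rewrite dotpE (bigD1 i) //= big1 => [|j /negbTE ji]; last by rewrite /evec mxE ji mul0r.
by rewrite /evec mxE !eqxx mul1r addr0.
Qed.

Lemma dotp_evecr (v : V) i : dotp v (evec R i) = v i 0.
Proof. by rewrite dotpC dotp_evecl. Qed.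

Lemma dotp_mulmx (u v : V) (A : 'M[R]_d) : dotp u (A *m v) = dotp (A^T *m u) v.
Proof. by rewrite /dotp trmx_mul trmxK mulmxA. Qed.

Lemma dotp_sym (u v : V) (A : 'M[R]_d) : A^T = A -> dotp u (A *m v) = dotp v (A *m u).
Proof. by move=> hA; rewrite dotp_mulmx hA dotpC. Qed.

End Alg.

Section An.
Context {R : realType} {d : nat}.
Local Notation V := 'cV[R]_d.

Lemma enorm_sum (I : Type) (r : seq I) (P : pred I) (f : I -> V) :
  enorm (\sum_(i <- r | P i) f i) <= \sum_(i <- r | P i) enorm (f i).
Proof.
elim/big_ind2: _ => [|x1 y1 x2 y2 h1 h2|i _]; first by rewrite enorm0.
  by apply: le_trans (enormD _ _) _; exact: lerD.
by [].
Qed.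

Lemma opnorm_has_sup (A : 'M[R]_d) :
  has_sup [set enorm (A *m v) | v in [set v : V | enorm v <= 1]].
Proof.
split; first by exists (enorm (A *m 0)), 0 => //=; rewrite enorm0 ler01.
exists (\sum_(j < d) enorm (A *m evec R j)) => _ [u /= hu <-].
rewrite {1}(vec_expand u) mulmx_sumr.
apply: le_trans (enorm_sum _ _ _ _) _; apply: ler_sum => j _.
rewrite -scalemxAr enormZ ler_piMl ?enorm_ge0 //.
exact: le_trans (enorm_coord _ _) hu.
Qed.

Lemma opnorm_bound (A : 'M[R]_d) (v : V) : enorm (A *m v) <= opnorm A * enorm v.
Proof.
have [v0|vn0] := eqVneq (enorm v) 0.
  by rewrite (enorm_eq0 v v0) mulmx0 !(@enorm0 R d) mulr0.
have vp : 0 < enorm v by rewrite lt_def vn0 enorm_ge0.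
have : enorm (A *m ((enorm v)^-1 *: v)) <= opnorm A.
  apply: (sup_upper_bound (opnorm_has_sup A)); exists ((enorm v)^-1 *: v) => //=.
  by rewrite enormZ ger0_norm ?invr_ge0 ?enorm_ge0 // mulVf.
rewrite -scalemxAr enormZ ger0_norm ?invr_ge0 ?enorm_ge0 //.
by rewrite ler_pdivrMl // mulrC.
Qed.

Lemma quad_bound (A : 'M[R]_d) (v : V) : `|dotp v (A *m v)| <= opnorm A * enorm v ^+ 2.
Proof.
apply: le_trans (CSabs _ _) _.
rewrite expr2 mulrA [opnorm A * _]mulrC -mulrA ler_wpM2l ?enorm_ge0 //.
exact: opnorm_bound.
Qed.

Lemma line_derive (f : V -> R) (y u : V) (t : R) :
  derive (fun s : R => f (s *: u + y)) t 1 = derive f (t *: u + y) u.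
Proof.
rewrite /derive.
have -> // : (fun h : R => h^-1 *: (((fun s : R => f (s *: u + y)) \o shift t) (h *: 1) - f (t *: u + y)))
  = (fun h => h^-1 *: ((f \o shift (t *: u + y)) (h *: u) - f (t *: u + y))).
by apply: funext => h /=; rewrite /shift /= scalerDl addrA [_%:A]mulr1.
Qed.

Lemma line_derivable (f : V -> R) (y u : V) (t : R) :
  derivable (fun s : R => f (s *: u + y)) t 1 <-> derivable f (t *: u + y) u.
Proof.
rewrite /derivable; have -> // : (fun h : R => h^-1 *: (((fun s : R => f (s *: u + y)) \o shift t) (h *: 1) - f (t *: u + y)))
  = (fun h => h^-1 *: ((f \o shift (t *: u + y)) (h *: u) - f (t *: u + y))).
by apply: funext => h /=; rewrite /shift /= scalerDl addrA [_%:A]mulr1.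
Qed.

Lemma grad_derive (f : V -> R) (y u : V) : differentiable f y ->
  derive f y u = dotp u (grad f y).
Proof.
move=> df; rewrite deriveE // {1}(vec_expand u) linear_sum dotpE.
apply: eq_bigr => i _; rewrite linearZ /= /grad mxE -deriveE //.
Qed.

Lemma mono1 (g : R -> R) (a b : R) : a <= b -> (forall t, derivable g t 1) ->
  (forall t, a <= t <= b -> derive1 g t <= 0) -> g b <= g a.
Proof.
move=> ab dg hg.
apply: (@ler0_derive1_le_cc R g a b).
- by move=> x _; exact: dg.
- by move=> x; rewrite in_itv /= => /andP [h1 h2]; apply: hg; rewrite !ltW.
- by apply: derivable_within_continuous => x _; exact: dg.
- by rewrite in_itv /= lexx ab.
- by rewrite in_itv /= lexx ab.
- exact: ab.
Qed.

Lemma comb1 (g : R -> R) (p : {poly R}) (c t : R) : derivable g t 1 ->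
  derivable (fun s => p.[s] + c * g s) t 1 /\
  derive (fun s => p.[s] + c * g s) t 1 = p^`().[t] + c * derive g t 1.
Proof.
move=> dg.
have -> : (fun s => p.[s] + c * g s) = horner p + c *: g by apply: funext.
have H : is_derive t 1 (horner p + c *: g) (p^`().[t] + c *: derive g t 1).
  apply: is_deriveD; apply: is_deriveZ; exact: derivableP.
by split; [exact: ex_derive | rewrite derive_val].
Qed.

Lemma poly_line (f : V -> R) (y u : V) (A B : R) :
  (forall s, f (s *: u + y) = f y + s * A + s ^+ 2 * B) ->
  derivable f y u /\ derive f y u = A.
Proof.
move=> hf.
pose p : {poly R} := (f y)%:P + A *: 'X + B *: 'X^2.
have E : (fun s : R => f (s *: u + y)) = horner p.
  apply: funext => s; rewrite hf /p !hornerE.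
  by rewrite expr2 /=; ring.
have L := line_derive f y u 0; have D := line_derivable f y u 0.
rewrite scale0r add0r E in L D.
split; first by apply/D; exact: ex_derive.
rewrite -L; case: (is_derive_poly p 0) => _ ->. by rewrite /p !(derivD, derivZ, derivC, derivX, derivXn) /= !hornerE.
Qed.

End An.

Section An2.
Context {R : realType} {d : nat}.
Local Notation V := 'cV[R]_d.

Lemma mono_quad (g : R -> R) (a0 a1 a2 c lo hi : R) : lo <= hi ->
  (forall s, derivable g s 1) ->
  (forall s, lo <= s <= hi -> a1 + 2 * a2 * s + c * derive g s 1 <= 0) ->
  a0 + a1 * hi + a2 * hi ^+ 2 + c * g hi <= a0 + a1 * lo + a2 * lo ^+ 2 + c * g lo.
Proof.
move=> lh dg hd.
pose p : {poly R} := a0%:P + a1 *: 'X + a2 *: 'X^2.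
have pE s : p.[s] = a0 + a1 * s + a2 * s ^+ 2.
  by rewrite /p !hornerE /=.
have pD s : p^`().[s] = a1 + 2 * a2 * s.
  rewrite /p !(derivD, derivZ, derivC, derivX, derivXn) /= !hornerE /=; ring.
rewrite -!pE.
apply: (@mono1 R (fun s => p.[s] + c * g s)) => // [t|t ht].
  by case: (comb1 g p c t (dg t)).
rewrite derive1E; case: (comb1 g p c t (dg t)) => _ ->.
by rewrite pD; apply: hd.
Qed.


Lemma convex_grad (f : V -> R) (x y : V) : convex_fun f -> differentiable f x ->
  dotp (y - x) (grad f x) <= f y - f x.
Proof.
move=> cf df; rewrite -grad_derive //.
have dv : derivable f x (y - x) := diff_derivable df.
set q := (fun h : R => h^-1 *: ((f \o shift x) (h *: (y - x)) - f x)).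
have cr : q @ 0^'+ --> derive f x (y - x).
  move=> A /dv /nbhs_ballP [_ /posnumP[e] xe_A].
  by exists e%:num => //= z xe_z /gt_eqF/negbT/xe_A; exact.
apply: (cvgr_to_le cr).
near=> h.
have h0 : 0 < h by near: h; exact: nbhs_right_gt.
have h1 : h <= 1 by near: h; apply: nbhs_right_le; exact: ltr01.
rewrite /q /= /shift.
have -> : h *: (y - x) + x = h *: y + (1 - h) *: x.
  by rewrite scalerBr scalerBl scale1r [x - _]addrC addrA.
have hc : f (h *: y + (1 - h) *: x) <= h * f y + (1 - h) * f x.
  by apply: cf; rewrite (ltW h0) h1.
rewrite ler_pdivrMl //.
lra.
Unshelve. all: by end_near.
Qed.

End An2.

Section An3.
Context {R : realType} {d : nat}.
Local Notation V := 'cV[R]_d.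

Lemma descent (F : V -> R) (gF : V -> V) (mu : R) : 0 <= mu ->
  (forall z u, derivable F z u /\ derive F z u = dotp u (gF z)) ->
  (forall z z', enorm (gF z - gF z') <= mu * enorm (z - z')) ->
  forall x y, F y <= F x + dotp (y - x) (gF x) + mu / 2 * enorm (y - x) ^+ 2.
Proof.
move=> mu0 hF hL x y.
have dl (s : R) : derivable (fun s : R => F (s *: (y - x) + x)) s 1.
  by apply/line_derivable; exact: (hF _ _).1.
have e0 := enorm_ge0 (y - x).
have cond (s : R) : 0 <= s <= 1 -> dotp (y - x) (gF (s *: (y - x) + x)) - dotp (y - x) (gF x)
    <= mu * enorm (y - x) ^+ 2 * s.
  move=> /andP [s0 s1].
  rewrite -dotpBr; apply: le_trans (CS _ _) _.
  apply: le_trans (ler_wpM2l e0 (hL _ _)) _.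
  rewrite addrK enormZ ger0_norm //.
  rewrite le_eqVlt; apply/orP; left; apply/eqP; ring.
have key : 0 + (- dotp (y - x) (gF x)) * 1 + (- (mu / 2 * enorm (y - x) ^+ 2)) * 1 ^+ 2
   + 1 * F (1 *: (y - x) + x) <= 0 + (- dotp (y - x) (gF x)) * 0
   + (- (mu / 2 * enorm (y - x) ^+ 2)) * 0 ^+ 2 + 1 * F (0 *: (y - x) + x).
  apply: (mono_quad (fun s : R => F (s *: (y - x) + x))) => // s hs.
  rewrite line_derive (hF _ _).2; have := cond s hs; lra.
rewrite scale1r scale0r add0r subrK expr1n expr0n /= !mulr1 !mulr0 !mul1r in key.
rewrite !add0r in key; lra.
Qed.


Lemma taylor (f : V -> R) (Hm : 'M[R]_d) (a x : V) (rho delta : R) :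
  (forall w, differentiable f w) -> (forall w, differentiable (grad f) w) ->
  hessian_lipschitz rho f -> 0 <= rho -> opnorm (Hm - hess f a) <= delta ->
  `|f x - (f a + dotp (x - a) (grad f a) + 2^-1 * dotp (x - a) (Hm *m (x - a)))|
   <= 2^-1 * (delta * enorm (x - a) ^+ 2 + rho * enorm (x - a) ^+ 3).
Proof.
move=> d1 d2 hL r0 hH.
have [v vE] : exists v, v = x - a by exists (x - a).
rewrite -vE.
have vx : v + a = x by rewrite vE subrK.
have [e eE] : exists e, e = enorm v by exists (enorm v).
rewrite -eE.
have e0 : 0 <= e by rewrite eE enorm_ge0.
have [M ME] : exists M, M = delta * e ^+ 2 + rho * e ^+ 3 by exists (delta * e ^+ 2 + rho * e ^+ 3).
rewrite -ME.
have fiD i y : differentiable (fun z => grad f z i 0) y.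
  exact: (differentiable_comp (d2 y) (differentiable_coord (grad f y) i 0)).
have hdir i y u : derive (fun z => grad f z i 0) y u = (hess f y *m u) i 0.
  rewrite grad_derive // dotpE mxE; apply: eq_bigr => j _.
  by rewrite mulrC; congr (_ * _); rewrite {1}/grad mxE /hess mxE.
pose G := \sum_(i < d) (v i 0 \*: (fun s : R => grad f (s *: v + a) i 0)).
have GE (s : R) : G s = dotp v (grad f (s *: v + a)).
  by rewrite /G fct_sumE dotpE; apply: eq_bigr => i _.
have Gd (s : R) : derivable G s 1 /\ derive G s 1 = dotp v (hess f (s *: v + a) *m v).
  have H : is_derive s 1 G (\sum_(i < d) v i 0 *: (hess f (s *: v + a) *m v) i 0).
    apply: is_derive_sum => i; apply: is_deriveZ; apply: DeriveDef.
      by apply/(line_derivable (fun z => grad f z i 0)); exact: diff_derivable.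
    by rewrite (line_derive (fun z => grad f z i 0)) hdir.
  split; first exact: ex_derive.
  by rewrite derive_val dotpE.
have fl (s : R) : derivable (fun s : R => f (s *: v + a)) s 1 /\
    derive (fun s : R => f (s *: v + a)) s 1 = dotp v (grad f (s *: v + a)).
  split; first by apply/line_derivable; exact: diff_derivable.
  by rewrite line_derive grad_derive.
have Hb (s : R) : 0 <= s <= 1 ->
    `|dotp v (hess f (s *: v + a) *m v) - dotp v (Hm *m v)| <= M.
  move=> /andP[s0 s1].
  rewrite -dotpBr -mulmxBl.
  have -> : hess f (s *: v + a) - Hm = (hess f (s *: v + a) - hess f a) - (Hm - hess f a).
    by rewrite opprB addrA subrK.
  apply: le_trans (CSabs _ _) _; rewrite mulmxBl -eE.
  have h1 := opnorm_bound (hess f (s *: v + a) - hess f a) v.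
  have h2 := opnorm_bound (Hm - hess f a) v.
  have h3 := hL (s *: v + a) a.
  rewrite addrK enormZ ger0_norm // -eE in h3.
  have h4 := enormD ((hess f (s *: v + a) - hess f a) *m v) (- ((Hm - hess f a) *m v)).
  rewrite enormN in h4; rewrite -eE in h1 h2.
  have k1 : enorm ((hess f (s *: v + a) - hess f a) *m v - (Hm - hess f a) *m v)
      <= rho * e * e + delta * e.
    apply: le_trans h4 _; apply: lerD.
      apply: le_trans h1 _; apply: ler_wpM2r => //.
      apply: le_trans h3 _; rewrite mulrA ler_wpM2r //.
      by rewrite -[X in _ <= X]mulr1 ler_wpM2l.
    by apply: le_trans h2 _; apply: ler_wpM2r.
  apply: le_trans (ler_wpM2l e0 k1) _.
  by rewrite ME le_eqVlt; apply/orP; left; apply/eqP; ring.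
set c2 := dotp v (Hm *m v).
set g0 := dotp v (grad f a).
have S1 (t : R) : 0 <= t <= 1 ->
    `|dotp v (grad f (t *: v + a)) - g0 - t * c2| <= M * t.
  move=> /andP[t0 t1].
  have up : 0 + (- c2 - M) * t + 0 * t ^+ 2 + 1 * G t
      <= 0 + (- c2 - M) * 0 + 0 * 0 ^+ 2 + 1 * G 0.
    apply: (mono_quad G) => // [s|s /andP[s0 st]]; first exact: (Gd s).1.
    rewrite (Gd s).2.
    have := Hb s; rewrite s0 (le_trans st t1) => /(_ isT).
    by rewrite ler_norml -/c2 => /andP[_ h]; lra.
  have lo : 0 + (c2 - M) * t + 0 * t ^+ 2 + (-1) * G t
      <= 0 + (c2 - M) * 0 + 0 * 0 ^+ 2 + (-1) * G 0.
    apply: (mono_quad G) => // [s|s /andP[s0 st]]; first exact: (Gd s).1.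
    rewrite (Gd s).2.
    have := Hb s; rewrite s0 (le_trans st t1) => /(_ isT).
    by rewrite ler_norml -/c2 => /andP[h _]; lra.
  rewrite !GE scale0r in up lo.
  rewrite !add0r -/g0 in up lo.
  rewrite ler_norml; apply/andP; split; lra.
have up : 0 + (- g0) * 1 + (- (2^-1 * c2 + M / 2)) * 1 ^+ 2 + 1 * f (1 *: v + a)
   <= 0 + (- g0) * 0 + (- (2^-1 * c2 + M / 2)) * 0 ^+ 2 + 1 * f (0 *: v + a).
  apply: (mono_quad (fun s : R => f (s *: v + a))) => // [s|s hs]; first exact: (fl s).1.
  rewrite (fl s).2; have := S1 s hs.
  by rewrite ler_norml => /andP[_ h]; lra.
have lo : 0 + g0 * 1 + (2^-1 * c2 - M / 2) * 1 ^+ 2 + (-1) * f (1 *: v + a)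
   <= 0 + g0 * 0 + (2^-1 * c2 - M / 2) * 0 ^+ 2 + (-1) * f (0 *: v + a).
  apply: (mono_quad (fun s : R => f (s *: v + a))) => // [s|s hs]; first exact: (fl s).1.
  rewrite (fl s).2; have := S1 s hs.
  by rewrite ler_norml => /andP[h _]; lra.
rewrite scale1r scale0r vx !add0r expr1n expr0n in up lo.
rewrite /= in up lo; rewrite ler_norml; apply/andP; split; lra.
Qed.

End An3.

Section GD.
Context {R : realType} {d : nat}.
Local Notation V := 'cV[R]_d.

Lemma gd_step (Ft : V -> R) (g : V -> V) (mu : R) (x u : V) :
  0 < mu ->
  (forall x y, Ft y <= Ft x + dotp (y - x) (g x) + mu / 2 * enorm (y - x) ^+ 2) ->
  (forall x y, Ft x + dotp (y - x) (g x) <= Ft y) ->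
  Ft (x - mu^-1 *: g x) - Ft u
    <= mu / 2 * (enorm (x - u) ^+ 2 - enorm (x - mu^-1 *: g x - u) ^+ 2)
  /\ Ft (x - mu^-1 *: g x) <= Ft x.
Proof.
move=> mu0 hD hC.
have D := hD x (x - mu^-1 *: g x).
have C := hC x u.
set c := mu^-1 in D *.
have c0 : 0 < c by rewrite invr_gt0.
have mc : mu * c = 1 by rewrite mulfV // gt_eqF.
have e1 : x - c *: g x - x = - (c *: g x) by rewrite addrAC subrr add0r.
have e2 : x - c *: g x - u = (x - u) - c *: g x by rewrite addrAC.
have e3 : u - x = - (x - u) by rewrite opprB.
rewrite e1 enormN enorm_sq dotpZl dotpZr dotpNl dotpZl in D.
rewrite e3 dotpNl in C.
rewrite e2 !enorm_sq.
move: C; move: (x - u) => y C.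
rewrite !(dotpBl, dotpBr, dotpZl, dotpZr) (dotpC (g x) y).
set A := dotp y (g x) in C *.
set B := dotp (g x) (g x) in D *.
set N := dotp y y.
have B0 : 0 <= B by rewrite /B dotpvv_ge0.
have cB : 0 <= c * B by rewrite mulr_ge0 // ltW.
have i1 : mu / 2 * (c * (c * B)) = c * B / 2.
  have -> : mu / 2 * (c * (c * B)) = (mu * c) * (c * B) / 2 by ring.
  by rewrite mc mul1r.
have i2 : mu / 2 * (N - (N - c * A - (c * A - c * (c * B)))) = A - c * B / 2.
  have -> : N - (N - c * A - (c * A - c * (c * B))) = 2 * (c * A) - c * (c * B) by ring.
  rewrite mulrBr i1; congr (_ - _).
  have -> : mu / 2 * (2 * (c * A)) = (mu * c) * A * (2 / 2) by ring.
  by rewrite mc divff ?pnatr_eq0 // !mulr1 mul1r.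
rewrite i2; split; lra.
Qed.


Lemma gd_main (Ft : V -> R) (g : V -> V) (mu : R) (w : nat -> V) (u : V) (T : nat) :
  0 < mu ->
  (forall x y, Ft y <= Ft x + dotp (y - x) (g x) + mu / 2 * enorm (y - x) ^+ 2) ->
  (forall x y, Ft x + dotp (y - x) (g x) <= Ft y) ->
  (forall t, w t.+1 = w t - mu^-1 *: g (w t)) ->
  (forall t, (1 <= t <= T)%N -> Ft u <= Ft (w t)) ->
  (0 < T)%N ->
  Ft (w T) - Ft u <= mu / 2 * enorm (w 0%N - u) ^+ 2 / T%:R
  /\ enorm (w T - u) <= enorm (w 0%N - u).
Proof.
move=> mu0 hD hC hw hu T0.
have step (t : nat) := gd_step Ft g mu (w t) u mu0 hD hC.
have mono t : Ft (w t.+1) <= Ft (w t) by rewrite hw; exact: (step t).2.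
have tele n : \sum_(t < n) (Ft (w t.+1) - Ft u)
    <= mu / 2 * (enorm (w 0%N - u) ^+ 2 - enorm (w n - u) ^+ 2).
  elim: n => [|n IH]; first by rewrite big_ord0 subrr mulr0.
  rewrite big_ord_recr /=.
  have := (step n).1; rewrite -hw => h.
  have -> : mu / 2 * (enorm (w 0%N - u) ^+ 2 - enorm (w n.+1 - u) ^+ 2)
    = mu / 2 * (enorm (w 0%N - u) ^+ 2 - enorm (w n - u) ^+ 2)
      + mu / 2 * (enorm (w n - u) ^+ 2 - enorm (w n.+1 - u) ^+ 2) by ring.
  exact: lerD.
have monok k t : Ft (w (t + k)%N) <= Ft (w t).
  elim: k => [|k IH]; first by rewrite addn0.
  by rewrite addnS; apply: le_trans (mono _) IH.
split.
  have Tp : 0 < (T%:R : R) by rewrite ltr0n.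
  rewrite ler_pdivlMr // mulrC.
  apply: (le_trans _ (le_trans (tele T) _)).
    have sc : \sum_(t < T) (Ft (w T) - Ft u) = T%:R * (Ft (w T) - Ft u).
      by rewrite sumr_const card_ord mulr_natl.
    rewrite -sc.
    apply: ler_sum => t _; apply: lerB => //.
    have := monok (T - t.+1)%N t.+1; rewrite subnKC //.
  apply: ler_wpM2l; first by rewrite divr_ge0 // ltW.
  have := sqr_ge0 (enorm (w T - u)); lra.
have fej t : (t <= T)%N -> enorm (w t - u) ^+ 2 <= enorm (w 0%N - u) ^+ 2.
  elim: t => [|t IH] ht; first by [].
  apply: le_trans (IH (ltnW ht)).
  have := (step t).1; rewrite -hw => h.
  have := hu t.+1; rewrite ht /= => /(_ isT) hu'.
  have : 0 <= mu / 2 * (enorm (w t - u) ^+ 2 - enorm (w t.+1 - u) ^+ 2).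
    apply: le_trans h; rewrite subr_ge0 //.
  by rewrite pmulr_rge0 ?divr_gt0 // subr_ge0.
apply: sq_le; first exact: enorm_ge0.
exact: fej.
Qed.

End GD.

Section Spec.
Context {R : realType} {d : nat}.
Local Notation V := 'cV[R]_d.

Lemma dotp_sumr (I : Type) (r : seq I) (P : pred I) (f : I -> V) (u : V) :
  dotp u (\sum_(i <- r | P i) f i) = \sum_(i <- r | P i) dotp u (f i).
Proof.
elim/big_rec2: _ => [|i y1 y2 _ IH]; first by rewrite dotp0r.
by rewrite dotpDr IH.
Qed.

Lemma pow_mono (r b : R) : 0 <= r -> r <= b -> r ^+ 2 <= b ^+ 2 /\ r ^+ 3 <= b ^+ 3.
Proof.
move=> r0 rb; have b0 : 0 <= b := le_trans r0 rb.
have h2 : r ^+ 2 <= b ^+ 2 by rewrite !expr2 ler_pM.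
split => //; rewrite (exprS r 2) (exprS b 2); apply: ler_pM => //; exact: sqr_ge0.
Qed.

Lemma sum_sq (D s : R) : 0 <= D -> 0 <= s ->
  (D + s) ^+ 2 <= 2 * D ^+ 2 + 2 * s ^+ 2 /\ (D + s) ^+ 3 <= 4 * D ^+ 3 + 4 * s ^+ 3.
Proof.
move=> D0 s0; split.
  have -> : 2 * D ^+ 2 + 2 * s ^+ 2 = (D + s) ^+ 2 + (D - s) ^+ 2 by ring.
  by rewrite lerDl sqr_ge0.
have -> : 4 * D ^+ 3 + 4 * s ^+ 3 = (D + s) ^+ 3 + 3 * ((D + s) * (D - s) ^+ 2) by ring.
by rewrite lerDl mulr_ge0 // mulr_ge0 ?addr_ge0 // sqr_ge0.
Qed.

Lemma quad_line (c : R) (g a : V) (Hm : 'M[R]_d) (y u : V) (s : R) : Hm^T = Hm ->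
  c + dotp (s *: u + y - a) g + 2^-1 * dotp (s *: u + y - a) (Hm *m (s *: u + y - a))
  = (c + dotp (y - a) g + 2^-1 * dotp (y - a) (Hm *m (y - a)))
    + s * dotp u (g + Hm *m (y - a)) + s ^+ 2 * (2^-1 * dotp u (Hm *m u)).
Proof.
move=> hs; have e : s *: u + y - a = s *: u + (y - a) by rewrite addrA.
rewrite e; move: (y - a) => z.
rewrite mulmxDr -scalemxAr !(dotpDl, dotpDr, dotpZl, dotpZr) (dotp_sym z u Hm hs).
by field.
Qed.

Lemma line_comb (f h : V -> R) (y u : V) (c0 A B c : R) :
  (forall s, f (s *: u + y) = c0 + s * A + s ^+ 2 * B + c * h (s *: u + y)) ->
  differentiable h y -> derivable f y u /\ derive f y u = A + c * dotp u (grad h y).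
Proof.
move=> hf dh.
pose p : {poly R} := c0%:P + A *: 'X + B *: 'X^2.
have E : (fun s : R => f (s *: u + y)) = (fun s => p.[s] + c * h (s *: u + y)).
  apply: funext => s; rewrite hf /p !hornerE /=.
  by rewrite expr2 /=; ring.
have dh0 : derivable (fun s : R => h (s *: u + y)) 0 1.
  by apply/line_derivable; rewrite scale0r add0r; exact: diff_derivable.
have [h1 h2] := comb1 _ p c 0 dh0.
have L := line_derive f y u 0; have D := line_derivable f y u 0.
rewrite scale0r add0r E in L D.
split; first by apply/D.
rewrite -L h2 line_derive scale0r add0r grad_derive //.
by rewrite /p !(derivD, derivZ, derivC, derivX, derivXn) /= !hornerE.
Qed.

End Spec.

Theorem theorem3 (R : realType) (d K : nat) (L : nat -> 'cV[R]_d -> R)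
  (mu rho delta : R) (what : nat -> 'cV[R]_d) (H : nat -> 'M[R]_d)
  (W : set 'cV[R]_d) (wstar wtstar : 'cV[R]_d) (T : nat) (w : nat -> 'cV[R]_d) :
  (2 <= K)%N ->
  (forall k, (1 <= k <= K)%N -> twice_differentiable (L k)) ->
  (forall k, (1 <= k <= K)%N -> convex_fun (L k)) ->
  0 < mu -> 0 <= rho -> 0 <= delta ->
  (forall k, (1 <= k <= K)%N -> smooth_with mu (L k)) ->
  (forall k, (1 <= k <= K)%N -> hessian_lipschitz rho (L k)) ->
  (forall k, (1 <= k < K)%N -> sym_psd (H k)) ->
  (forall k, (1 <= k < K)%N -> opnorm (H k) <= mu) ->
  (forall k, (1 <= k < K)%N -> opnorm (H k - hess (L k) (what k)) <= delta) ->
  let Ltilde := fun x : 'cV[R]_d => \sum_(1 <= k < K)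
      (L k (what k) + dotp (x - what k) (grad (L k) (what k))
       + 2^-1 * dotp (x - what k) (H k *m (x - what k))) in
  let Ftilde := fun x : 'cV[R]_d => K%:R^-1 * (Ltilde x + L K x) in
  let F := fun x : 'cV[R]_d => K%:R^-1 * \sum_(1 <= k < K.+1) L k x in
  wstar \in W -> (forall x, x \in W -> F wstar <= F x) ->
  wtstar \in W -> (forall x, x \in W -> Ftilde wtstar <= Ftilde x) ->
  w 0%N = what K.-1 ->
  (forall t, w t.+1 = w t - mu^-1 *: grad Ftilde (w t)) ->
  (forall t, (t <= T)%N -> w t \in W) ->
  (0 < T)%N ->
  let Dt := enorm (w 0%N - wtstar) in
  let alpha := 2 * mu * Dt ^+ 2 in
  let beta := (2 * K%:R)^-1 * \sum_(1 <= k < K)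
      (delta * (enorm (wstar - what k) ^+ 2 + 2 * Dt ^+ 2
                + 2 * enorm (wtstar - what k) ^+ 2)
       + rho * (enorm (wstar - what k) ^+ 3 + 4 * Dt ^+ 3
                + 4 * enorm (wtstar - what k) ^+ 3)) in
  F (w T) - F wstar <= alpha / T%:R + beta.
Proof.
move=> K2 htd hconv mu0 rho0 delta0 hsm hhl hpsd hHn hHd Ltilde Ftilde F
  wsW wsmin wtW wtmin w0 hw hWt T0.
rewrite [X in is_true X]/=.
set Dt := enorm (w 0%N - wtstar).
have K1 : (1 <= K)%N by apply: leq_trans K2.
have Kp : 0 < (K%:R : R) by rewrite ltr0n; apply: leq_trans K2.
pose q k x := L k (what k) + dotp (x - what k) (grad (L k) (what k))
       + 2^-1 * dotp (x - what k) (H k *m (x - what k)).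
pose gF y := K%:R^-1 *: (\sum_(1 <= k < K) (grad (L k) (what k) + H k *m (y - what k))
              + grad (L K) y).
have LtE x : Ltilde x = \sum_(1 <= k < K) q k x by [].
have FtE x : Ftilde x = K%:R^-1 * (Ltilde x + L K x) by [].
have dLK : forall x, differentiable (L K) x by move=> x; case: (htd K); rewrite ?K1 ?leqnn.
have Lline y u s : Ltilde (s *: u + y) = Ltilde y
    + s * dotp u (\sum_(1 <= k < K) (grad (L k) (what k) + H k *m (y - what k)))
    + s ^+ 2 * (\sum_(1 <= k < K) 2^-1 * dotp u (H k *m u)).
  rewrite !LtE dotp_sumr mulr_sumr mulr_sumr -!big_split /=.
  apply: eq_big_nat => k hk; rewrite /q quad_line //.
  by case: (hpsd k hk).
have Fd y u : derivable Ftilde y u /\ derive Ftilde y u = dotp u (gF y).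
  have := line_comb Ftilde (L K) y u (K%:R^-1 * Ltilde y)
    (K%:R^-1 * dotp u (\sum_(1 <= k < K) (grad (L k) (what k) + H k *m (y - what k))))
    (K%:R^-1 * (\sum_(1 <= k < K) 2^-1 * dotp u (H k *m u))) K%:R^-1 _ (dLK y).
  move=> /(_ _) [s|h1 h2].
    by rewrite FtE Lline; ring.
  split => //; rewrite h2 /gF dotpZr dotpDr; ring.
have gradE y : grad Ftilde y = gF y.
  apply/matrixP => i j; rewrite (ord1 j) /grad mxE (Fd y _).2.
  by rewrite dotp_evecl.
have gL z z' : enorm (gF z - gF z') <= mu * enorm (z - z').
  rewrite /gF -scalerBr enormZ ger0_norm; last by rewrite invr_ge0 ltW.
  have -> : (\sum_(1 <= k < K) (grad (L k) (what k) + H k *m (z - what k)) + grad (L K) z)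
      - (\sum_(1 <= k < K) (grad (L k) (what k) + H k *m (z' - what k)) + grad (L K) z')
      = \sum_(1 <= k < K) H k *m (z - z') + (grad (L K) z - grad (L K) z').
    rewrite opprD addrACA -sumrB; congr (_ + _); apply: eq_bigr => k _.
    rewrite opprD addrACA subrr add0r -mulmxBr; congr (_ *m _).
    by rewrite opprB addrA subrK.
  have s1 : enorm (\sum_(1 <= k < K) H k *m (z - z')) <= (K - 1)%N%:R * (mu * enorm (z - z')).
    apply: le_trans (enorm_sum _ _ _ _) _.
    have -> : (K - 1)%N%:R * (mu * enorm (z - z')) = \sum_(1 <= k < K) (mu * enorm (z - z')).
      by rewrite sumr_const_nat mulr_natl.
    apply: ler_sum_nat => k hk.
    apply: le_trans (opnorm_bound _ _) _; apply: ler_wpM2r; first exact: enorm_ge0.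
    exact: hHn.
  have s2 : enorm (grad (L K) z - grad (L K) z') <= mu * enorm (z - z').
    by apply: hsm; rewrite K1 leqnn.
  have s3 := enormD (\sum_(1 <= k < K) H k *m (z - z')) (grad (L K) z - grad (L K) z').
  rewrite natrB // in s1.
  have e0 := enorm_ge0 (z - z').
  have -> : mu * enorm (z - z') = K%:R^-1 * ((K%:R - 1) * (mu * enorm (z - z')) + mu * enorm (z - z')).
    by field; rewrite gt_eqF.
  apply: ler_wpM2l; first by rewrite invr_ge0 ltW.
  by apply: le_trans s3 _; apply: lerD.
have hC x y : Ftilde x + dotp (y - x) (gF x) <= Ftilde y.
  have e := Lline x (y - x) 1; rewrite scale1r subrK expr1n !mul1r in e.
  have cv := convex_grad (L K) x y (hconv K (ltac:(by rewrite K1 leqnn))) (dLK x).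
  have B0 : 0 <= \sum_(1 <= k < K) 2^-1 * dotp (y - x) (H k *m (y - x)).
    rewrite big_nat; apply: sumr_ge0 => k /= hk.
    by rewrite mulr_ge0 ?invr_ge0 ?ler0n //; case: (hpsd k hk).
  have f1 : 0 <= K%:R^-1 * \sum_(1 <= k < K) 2^-1 * dotp (y - x) (H k *m (y - x)).
    by rewrite mulr_ge0 // invr_ge0 ltW.
  have f2 : K%:R^-1 * (L K x + dotp (y - x) (grad (L K) x)) <= K%:R^-1 * L K y.
    by apply: ler_wpM2l; [rewrite invr_ge0 ltW | lra].
  rewrite !FtE e /gF dotpZr dotpDr dotp_sumr.
  rewrite dotp_sumr in f1 e.
  lra.
have hD := descent Ftilde gF mu (ltW mu0) Fd gL.
have hw' t : w t.+1 = w t - mu^-1 *: gF (w t) by rewrite hw gradE.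
have hu t : (1 <= t <= T)%N -> Ftilde wtstar <= Ftilde (w t).
  by move=> /andP[_ ht]; apply: wtmin; apply: hWt.
have [GD1 GD2] := gd_main Ftilde gF mu w wtstar T mu0 hD hC hw' hu T0.
have tay k x : (1 <= k < K)%N -> `|L k x - q k x|
    <= 2^-1 * (delta * enorm (x - what k) ^+ 2 + rho * enorm (x - what k) ^+ 3).
  move=> hk; have hk' : (1 <= k <= K)%N.
    by case/andP: hk => -> /ltnW.
  case: (htd k hk') => d1 d2.
  exact: (taylor (L k) (H k) (what k) x rho delta d1 d2 (hhl k hk') rho0 (hHd k hk)).
have FmFt x : F x - Ftilde x = K%:R^-1 * \sum_(1 <= k < K) (L k x - q k x).
  rewrite /F FtE LtE /= big_nat_recr //= sumrB; ring.
set SX := \sum_(1 <= k < K) (delta * (2 * Dt ^+ 2 + 2 * enorm (wtstar - what k) ^+ 2)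
            + rho * (4 * Dt ^+ 3 + 4 * enorm (wtstar - what k) ^+ 3)).
set SY := \sum_(1 <= k < K) (delta * enorm (wstar - what k) ^+ 2
            + rho * enorm (wstar - what k) ^+ 3).
have B1 : \sum_(1 <= k < K) (L k (w T) - q k (w T)) <= 2^-1 * SX.
  rewrite /SX mulr_sumr; apply: ler_sum_nat => k hk.
  have := tay k (w T) hk; rewrite ler_norml => /andP[_ h]; apply: le_trans h _.
  have Dt0 : 0 <= Dt by exact: enorm_ge0.
  have s0 := enorm_ge0 (wtstar - what k).
  have rle : enorm (w T - what k) <= Dt + enorm (wtstar - what k).
    have -> : w T - what k = (w T - wtstar) + (wtstar - what k).
      by rewrite addrA subrK.
    by apply: le_trans (enormD _ _) _; apply: lerD.
  have [p2 p3] := pow_mono _ _ (enorm_ge0 _) rle.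
  have [q2 q3] := sum_sq _ _ Dt0 s0.
  apply: ler_wpM2l; first by rewrite invr_ge0 ler0n.
  apply: lerD; apply: ler_wpM2l => //.
    exact: le_trans p2 q2.
  exact: le_trans p3 q3.
have B4 : - \sum_(1 <= k < K) (L k wstar - q k wstar) <= 2^-1 * SY.
  rewrite /SY mulr_sumr -sumrN; apply: ler_sum_nat => k hk.
  have := tay k wstar hk; rewrite ler_norml => /andP[h _].
  by rewrite lerNl.
have B3 : Ftilde wtstar <= Ftilde wstar by apply: wtmin.
have sZ : \sum_(1 <= k < K)
      (delta * (enorm (wstar - what k) ^+ 2 + 2 * Dt ^+ 2
                + 2 * enorm (wtstar - what k) ^+ 2)
       + rho * (enorm (wstar - what k) ^+ 3 + 4 * Dt ^+ 3
                + 4 * enorm (wtstar - what k) ^+ 3)) = SX + SY.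
  by rewrite /SX /SY -big_split; apply: eq_bigr => k _ /=; ring.
rewrite sZ invfM.
have E1 := FmFt (w T); have E2 := FmFt wstar.
have Kinv0 : 0 <= K%:R^-1 :> R by rewrite invr_ge0 ltW.
have h1 := ler_wpM2l Kinv0 B1.
have h2 := ler_wpM2l Kinv0 B4.
have Tp : 0 < (T%:R : R) by rewrite ltr0n.
have h3 : 0 <= mu * Dt ^+ 2 / T%:R.
  by rewrite divr_ge0 ?ler0n // mulr_ge0 ?sqr_ge0 // ltW.
rewrite mulrN in h2.
have e3 : mu / 2 * Dt ^+ 2 / T%:R = 2^-1 * (mu * Dt ^+ 2 / T%:R) by ring.
rewrite e3 in GD1.
have -> : 2 * mu * Dt ^+ 2 / T%:R = 2 * (mu * Dt ^+ 2 / T%:R) by ring.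
lra.
Qed.
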